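(* Let $m$ be a positive integer and $h$ a positive integer, and assume that the ternary (base-3) expansion of $4^m$ contains no block of $h$ consecutive digits all equal to $0$, and no block of $h$ consecutive digits all equal to $2$. Then the inequality $$\biggl\|\biggl(\frac43\biggr)^k\biggr\| \ge \biggl(\frac49\biggr)^k$$ holds for all integers $k$ satisfying $$m\,\frac{\log 4}{\log 9} + \frac h2 \le k \le m,$$ where $\|x\|$ denotes the distance from the real number $x$ to the nearest integer.
   Context: $\|x\| = \min_{n\in\mathbb Z}|x-n|$ for real $x$. The ternary expansion is the standard base-3 representation of the positive integer $4^m$ (with digits in $\{0,1,2\}$, no leading zeros beyond the representation). *)

(* Defs.v *)
From Stdlib Require Import Reals Lra Lia List Arith.
Open Scope R_scope.

Definition dist_int (x : R) : R :=
  Rmin (x - IZR (Int_part x)) (IZR (Int_part x) + 1 - x).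

(* Little-endian base-3 digits of n (empty for n = 0); fuel = n suffices. *)
Fixpoint tern_aux (fuel n : nat) : list nat :=
  match fuel with
  | O => nil
  | S f => match n with
           | O => nil
           | _ => (n mod 3)%nat :: tern_aux f (n / 3)%nat
           end
  end.

Definition ternary_digits (n : nat) : list nat := tern_aux n n.

Definition has_block (ds : list nat) (h d : nat) : Prop :=
  exists i : nat, (i + h <= length ds)%nat /\
    forall j : nat, (j < h)%nat -> nth (i + j) ds 0%nat = d.

(* Main.v *)
Require Import Defs.
From Stdlib Require Import Reals Lra Lia Arith ZArith List.
Open Scope R_scope.

Lemma digit_nth : forall f n j, (n <= f)%nat ->
  nth j (tern_aux f n) 0%nat = ((n / 3 ^ j) mod 3)%nat.
Proof.
  induction f as [|f IH]; intros n j Hn.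
  - assert (n = 0%nat) by lia; subst. rewrite Nat.Div0.div_0_l. destruct j; reflexivity.
  - simpl. destruct n as [|n'].
    + rewrite Nat.Div0.div_0_l. destruct j; reflexivity.
    + destruct j as [|j].
      * change (3 ^ 0)%nat with 1%nat. rewrite Nat.div_1_r. reflexivity.
      * change (nth j (tern_aux f (S n' / 3)) 0%nat = (S n' / 3 ^ S j) mod 3)%nat. rewrite IH.
        -- rewrite Nat.Div0.div_div. simpl. reflexivity.
        -- assert (S n' / 3 < S n')%nat by (apply Nat.div_lt; lia). lia.
Qed.

Lemma digit_len : forall f n j, (n <= f)%nat -> (3 ^ j <= n)%nat ->
  (j < length (tern_aux f n))%nat.
Proof.
  induction f as [|f IH]; intros n j Hn Hj.
  - assert (n = 0%nat) by lia; subst. pose proof (Nat.pow_nonzero 3 j). lia.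
  - destruct n as [|n'].
    + pose proof (Nat.pow_nonzero 3 j). lia.
    + change (length (tern_aux (S f) (S n'))) with (S (length (tern_aux f (S n' / 3)))). destruct j as [|j]; [lia|].
      apply -> Nat.succ_lt_mono. apply IH.
      * assert (S n' / 3 < S n')%nat by (apply Nat.div_lt; lia). lia.
      * apply Nat.div_le_lower_bound; [lia|]. rewrite Nat.pow_succ_r' in Hj. lia.
Qed.

Lemma digit_of_split : forall A q r k i, (i < k)%nat -> A = (3 ^ k * q + r)%nat ->
  ((A / 3 ^ i) mod 3 = (r / 3 ^ i) mod 3)%nat.
Proof.
  intros A q r k i Hik HA.
  assert (Hk : (3 ^ k = 3 ^ i * (3 * 3 ^ (k - i - 1)))%nat).
  { rewrite <- Nat.pow_succ_r'. rewrite <- Nat.pow_add_r. f_equal. lia. }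
  assert (HA' : A = ((3 * 3 ^ (k - i - 1) * q) * 3 ^ i + r)%nat).
  { rewrite HA, Hk. ring. }
  rewrite HA', Nat.div_add_l by (apply Nat.pow_nonzero; lia).
  rewrite <- Nat.mul_assoc, Nat.add_comm, (Nat.mul_comm 3).
  rewrite Nat.Div0.mod_add. reflexivity.
Qed.

Lemma pow3_pos : forall n, (1 <= 3 ^ n)%nat.
Proof. intro n. pose proof (Nat.pow_nonzero 3 n). lia. Qed.

Lemma pow3_le : forall a b, (a <= b)%nat -> (3 ^ a <= 3 ^ b)%nat.
Proof. intros. apply Nat.pow_le_mono_r; lia. Qed.

Lemma block_gen : forall A k h d, (1 <= h <= k)%nat -> (3 ^ (k - 1) <= A)%nat ->
  (forall i, (k - h <= i < k)%nat -> ((A mod 3 ^ k) / 3 ^ i) mod 3 = d)%nat ->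
  has_block (ternary_digits A) h d.
Proof.
  intros A k h d Hh HA Hd. exists (k - h)%nat. split.
  - unfold ternary_digits. pose proof (digit_len A A (k-1) (le_n _) HA). lia.
  - intros j Hj. unfold ternary_digits. rewrite digit_nth by lia.
    rewrite (digit_of_split A (A / 3 ^ k) (A mod 3 ^ k) k (k - h + j)) by (lia || apply Nat.div_mod; apply Nat.pow_nonzero; lia).
    apply Hd. lia.
Qed.

Lemma block0 : forall A k h, (1 <= h <= k)%nat -> (3 ^ (k - 1) <= A)%nat ->
  (A mod 3 ^ k < 3 ^ (k - h))%nat -> has_block (ternary_digits A) h 0.
Proof.
  intros A k h Hh HA Hr. apply (block_gen A k h); auto.
  intros i Hi. rewrite Nat.div_small; [reflexivity|].
  pose proof (pow3_le (k-h) i). lia.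
Qed.

Lemma block2 : forall A k h, (1 <= h <= k)%nat -> (3 ^ (k - 1) <= A)%nat ->
  (3 ^ k <= A mod 3 ^ k + 3 ^ (k - h))%nat -> has_block (ternary_digits A) h 2.
Proof.
  intros A k h Hh HA Hr. apply (block_gen A k h); auto.
  intros i Hi.
  set (r := (A mod 3 ^ k)%nat) in *.
  assert (Hrk : (r < 3 ^ k)%nat) by (apply Nat.mod_upper_bound; apply Nat.pow_nonzero; lia).
  set (p := (k - i - 1)%nat).
  assert (Hk : (3 ^ k = 3 ^ i * (3 * 3 ^ p))%nat).
  { rewrite <- Nat.pow_succ_r'. rewrite <- Nat.pow_add_r. f_equal. unfold p. lia. }
  pose proof (pow3_le (k-h) i ltac:(lia)).
  pose proof (pow3_pos p). pose proof (pow3_pos i).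
  set (X := (3 ^ i)%nat) in *. set (Y := (3 ^ p)%nat) in *.
  assert (Hq : (r / X = 3 * Y - 1)%nat).
  { symmetry. apply (Nat.div_unique _ _ _ (r - X * (3 * Y - 1))); nia. }
  rewrite Hq. symmetry. apply (Nat.mod_unique _ _ (Y - 1)); lia.
Qed.

Lemma ln_step (m h k : nat) : INR m * (ln 4 / ln 9) + INR h / 2 <= INR k ->
  (4 ^ m * 3 ^ h <= 3 ^ k * 3 ^ k)%nat.
Proof.
  intro H.
  assert (H9 : ln 9 = 2 * ln 3).
  { replace 9 with (3 * 3) by lra. rewrite ln_mult by lra. lra. }
  assert (H3 : 0 < ln 3) by (rewrite <- ln_1; apply ln_increasing; lra).
  assert (H' : INR m * ln 4 + INR h * ln 3 <= INR k * ln 9).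
  { rewrite H9 in H |- *. 
    assert (E : INR m * (ln 4 / (2 * ln 3)) * (2 * ln 3) = INR m * ln 4) by (field; lra).
    nra. }
  destruct (le_lt_dec (4 ^ m * 3 ^ h) (3 ^ k * 3 ^ k)) as [|Hlt]; [assumption|exfalso].
  apply lt_INR in Hlt. rewrite !mult_INR, !pow_INR in Hlt. simpl INR in Hlt.
  replace (1+1+1+1) with 4 in Hlt by lra. replace (1+1+1) with 3 in Hlt by lra.
  rewrite <- Rpow_mult_distr in Hlt. replace (3*3) with 9 in Hlt by lra.
  apply ln_increasing in Hlt.
  - rewrite ln_mult, !ln_pow in Hlt by (try apply pow_lt; lra). lra.
  - apply pow_lt; lra.
Qed.

Lemma real_step (k : nat) : dist_int ((4 / 3) ^ k) < (4 / 9) ^ k ->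
  exists M : Z, (Z.abs (Z.of_nat (4 ^ k) - M * Z.of_nat (3 ^ k)) * Z.of_nat (3 ^ k) < Z.of_nat (4 ^ k))%Z.
Proof.
  intro H. set (x := (4/3)^k) in *.
  destruct (base_Int_part x) as [B1 B2].
  set (N := Int_part x) in *.
  assert (HM : exists M : Z, Rabs (x - IZR M) < (4/9)^k).
  { unfold dist_int in H. fold N in H. unfold Rmin in H.
    destruct (Rle_dec (x - IZR N) (IZR N + 1 - x)).
    - exists N. rewrite Rabs_right by lra. lra.
    - exists (N + 1)%Z. rewrite plus_IZR. rewrite Rabs_left1 by lra. lra. }
  destruct HM as [M HM]. exists M.
  apply lt_IZR. rewrite mult_IZR, abs_IZR, minus_IZR, mult_IZR, <- !INR_IZR_INZ, !pow_INR.
  simpl INR. replace (1+1+1+1) with 4 by lra. replace (1+1+1) with 3 by lra.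
  assert (P3 : 0 < 3 ^ k) by (apply pow_lt; lra).
  assert (E1 : 4 ^ k - IZR M * 3 ^ k = (x - IZR M) * 3 ^ k).
  { unfold x. rewrite Rmult_minus_distr_r, <- Rpow_mult_distr. replace (4/3*3) with 4 by field. reflexivity. }
  assert (E2 : (4/9)^k * 3^k * 3^k = 4^k).
  { rewrite <- !Rpow_mult_distr. replace (4/9*3*3) with 4 by field. reflexivity. }
  rewrite E1, Rabs_mult, (Rabs_right (3^k)) by lra.
  rewrite <- E2. apply Rmult_lt_compat_r; [lra|]. apply Rmult_lt_compat_r; lra.
Qed.

Theorem lemma1 (m h : nat) :
  (0 < m)%nat -> (0 < h)%nat ->
  ~ has_block (ternary_digits (4 ^ m)) h 0 ->
  ~ has_block (ternary_digits (4 ^ m)) h 2 ->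
  forall k : nat,
    INR m * (ln 4 / ln 9) + INR h / 2 <= INR k ->
    (k <= m)%nat ->
    dist_int ((4 / 3) ^ k) >= (4 / 9) ^ k.
Proof.
  intros Hm Hh N0 N2 k Hk Hkm.
  apply Rnot_lt_ge; intro Hd.
  destruct (real_step k Hd) as [M HM].
  pose proof (ln_step m h k Hk) as HL.
  assert (Hac : (4 ^ m = 4 ^ k * 4 ^ (m - k))%nat).
  { rewrite <- Nat.pow_add_r. f_equal. lia. }
  assert (H34 : (3 ^ k <= 4 ^ k)%nat) by (apply Nat.pow_le_mono_l; lia).
  assert (H4c : (1 <= 4 ^ (m - k))%nat) by (pose proof (Nat.pow_nonzero 4 (m-k)); lia).
  assert (Hhk : (h <= k)%nat).
  { destruct (le_lt_dec h k) as [|Hlt]; [assumption|exfalso].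
    assert (3 ^ S k <= 3 ^ h)%nat by (apply Nat.pow_le_mono_r; lia).
    rewrite Nat.pow_succ_r' in H. rewrite Hac in HL.
    assert (3 ^ k * 1 * (3 * 3 ^ k) <= 4 ^ k * 4 ^ (m - k) * 3 ^ h)%nat
      by (apply Nat.mul_le_mono; [apply Nat.mul_le_mono|]; lia).
    pose proof (pow3_pos k). nia. }
  assert (Hlen : (3 ^ (k - 1) <= 4 ^ m)%nat).
  { pose proof (pow3_le (k-1) k ltac:(lia)). nia. }
  assert (Hbst : (3 ^ k = 3 ^ (k - h) * 3 ^ h)%nat).
  { rewrite <- Nat.pow_add_r. f_equal. lia. }
  pose proof (pow3_pos h). pose proof (pow3_pos (k - h)).
  set (a := (4 ^ k)%nat) in *. set (b := (3 ^ k)%nat) in *.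
  set (c := (4 ^ (m - k))%nat) in *. set (s := (3 ^ (k - h))%nat) in *.
  set (t := (3 ^ h)%nat) in *.
  set (E := (Z.of_nat a - M * Z.of_nat b)%Z) in *.
  set (D := (E * Z.of_nat c)%Z).
  assert (HD : (Z.abs D < Z.of_nat s)%Z).
  { assert (S1 : (Z.abs D * Z.of_nat b < Z.of_nat a * Z.of_nat c)%Z).
    { unfold D. rewrite Z.abs_mul, (Z.abs_eq (Z.of_nat c)) by lia.
      rewrite <- Z.mul_assoc, (Z.mul_comm (Z.of_nat c)), Z.mul_assoc.
      apply Z.mul_lt_mono_pos_r; lia. }
    assert (S2 : (Z.of_nat a * Z.of_nat c * Z.of_nat t <= Z.of_nat b * Z.of_nat b)%Z).
    { rewrite Hac in HL. rewrite <- !Nat2Z.inj_mul. apply inj_le. exact HL. }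
    assert (S3 : (Z.abs D * Z.of_nat b * Z.of_nat t < Z.of_nat s * Z.of_nat t * Z.of_nat b)%Z).
    { rewrite <- Nat2Z.inj_mul, <- Hbst.
      apply Z.lt_le_trans with (Z.of_nat a * Z.of_nat c * Z.of_nat t)%Z; [|lia].
      apply Z.mul_lt_mono_pos_r; lia. }
    nia. }
  assert (Hr : Z.of_nat (4 ^ m mod b) = ((Z.of_nat b * (M * Z.of_nat c) + D) mod Z.of_nat b)%Z).
  { rewrite Nat2Z.inj_mod. f_equal. rewrite Hac, Nat2Z.inj_mul. unfold D, E. ring. }
  assert (Hbs : (s <= b)%nat) by nia.
  destruct (Z_le_gt_dec 0 D) as [Dp|Dn].
  - apply N0. apply (block0 (4 ^ m) k h); [lia|exact Hlen|].
    rewrite <- Z.mod_unique with (q := (M * Z.of_nat c)%Z) (r := D) in Hr; [change (4 ^ m mod b < s)%nat; lia|lia|lia].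
  - apply N2. apply (block2 (4 ^ m) k h); [lia|exact Hlen|].
    rewrite <- Z.mod_unique with (q := (M * Z.of_nat c - 1)%Z) (r := (D + Z.of_nat b)%Z) in Hr; [change (b <= 4 ^ m mod b + s)%nat; lia|lia|ring].
Qed.
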